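(* Let $G\subseteq U(2)$ be a finite unitary reflection group and let $\mathcal R_G=\mathcal S_1\cup\mathcal S_2$ be a partition of its set of reflecting hyperplanes into two disjoint $G$-invariant subsets. Let $E\subseteq\mathbb C^2$ be a bounded $G$-invariant domain containing the origin. For $\delta>0$ and $j=1,2$ define $$E(\mathcal S_j,\delta)=\{(z,w)\in E\times E: d(z,Y)\geq\delta,\ d(w,Y)\geq\delta\ \ \forall Y\in\mathcal R_G\setminus\mathcal S_j\},$$ $$E_{\mathrm{reg}}(\delta)=\{(z,w)\in E\times E: d(z,bE)+d(w,bE)+|g.z-w|\geq\delta\ \ \forall g\in G\},$$ where $d$ denotes Euclidean distance. Then there exists $\delta>0$ such that $$E\times E=E(\mathcal S_1,\delta)\cup E(\mathcal S_2,\delta)\cup E_{\mathrm{reg}}(\delta).$$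
   Context: A reflection is an element of $U(2)$ of finite order whose fixed point set is a complex line (its reflecting hyperplane); a finite unitary reflection group $G$ is a finite subgroup of $U(2)$ generated by reflections, $\mathcal R_G$ is the set of reflecting hyperplanes of its reflections, and $G$ acts on $\mathcal R_G$ by $g.Y=\{g.v: v\in Y\}$. *)

(* Defs.v *)
From HB Require Import structures.
From mathcomp Require Import all_boot all_order all_algebra.
From mathcomp Require Import complex.
From mathcomp Require Import boolp classical_sets cardinality reals.
Set Implicit Arguments. Unset Strict Implicit. Unset Printing Implicit Defensive.
Import Order.TTheory GRing.Theory Num.Theory.
Local Open Scope ring_scope.
Local Open Scope classical_set_scope.

Section Defs.
Variable R : realType.

Definition cvec := 'cV[R[i]]_2.

Definition cabs2 (z : R[i]) : R := complex.Re z ^+ 2 + complex.Im z ^+ 2.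

Definition vnorm (v : cvec) : R := Num.sqrt (\sum_(i < 2) cabs2 (v i 0)).
Definition vdist (v w : cvec) : R := vnorm (v - w).

Definition setdist (v : cvec) (A : set cvec) : R := inf [set vdist v y | y in A].

Definition act (g : 'M[R[i]]_2) (v : cvec) : cvec := g *m v.
Definition act_set (g : 'M[R[i]]_2) (Y : set cvec) : set cvec := act g @` Y.

Definition adjoint (g : 'M[R[i]]_2) : 'M[R[i]]_2 := (map_mx (@conjc R) g)^T.
Definition unitary (g : 'M[R[i]]_2) : Prop := g *m adjoint g = 1%:M.

Definition fixset (g : 'M[R[i]]_2) : set cvec := [set v | act g v = v].

Definition cline (Y : set cvec) : Prop :=
  exists u : cvec, u != 0 /\ Y = [set c *: u | c in [set: R[i]]].

Definition reflection (g : 'M[R[i]]_2) : Prop :=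
  [/\ unitary g, exists n : nat, (0 < n)%N /\ g ^+ n = 1%:M & cline (fixset g)].

Definition finite_unitary_group (G : set 'M[R[i]]_2) : Prop :=
  [/\ finite_set G, (forall g, G g -> unitary g), G 1%:M,
      (forall g h, G g -> G h -> G (g *m h)) &
      (forall g, G g -> g \in unitmx /\ G (invmx g))].

Definition generated_by_reflections (G : set 'M[R[i]]_2) : Prop :=
  forall g, G g -> exists s : seq 'M[R[i]]_2,
    (forall r, r \in s -> G r /\ reflection r) /\
    g = foldr (fun r acc => r *m acc) 1%:M s.

Definition finite_unitary_reflection_group (G : set 'M[R[i]]_2) : Prop :=
  finite_unitary_group G /\ generated_by_reflections G.

Definition refl_hyperplanes (G : set 'M[R[i]]_2) : set (set cvec) :=
  [set Y | exists g, [/\ G g, reflection g & Y = fixset g]].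

Definition G_invariant_family (G : set 'M[R[i]]_2) (S : set (set cvec)) : Prop :=
  forall g Y, G g -> S Y -> S (act_set g Y).

Definition G_invariant_set (G : set 'M[R[i]]_2) (E : set cvec) : Prop :=
  forall g v, G g -> E v -> E (act g v).

Definition open_set (A : set cvec) : Prop :=
  forall v, A v -> exists r : R, 0 < r /\ forall w, vdist v w < r -> A w.
Definition closure_set (A : set cvec) : set cvec :=
  [set v | forall e : R, 0 < e -> exists w, A w /\ vdist v w < e].
Definition interior_set (A : set cvec) : set cvec :=
  [set v | exists r : R, 0 < r /\ forall w, vdist v w < r -> A w].
Definition boundary (A : set cvec) : set cvec := closure_set A `\` interior_set A.

Definition connected_set (A : set cvec) : Prop :=
  ~ exists U V : set cvec, [/\ open_set U /\ open_set V, A `<=` U `|` V,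
      A `&` U !=set0, A `&` V !=set0 & A `&` U `&` V = set0].

Definition bounded_set (A : set cvec) : Prop :=
  exists M : R, forall v, A v -> vnorm v <= M.

Definition domain (A : set cvec) : Prop :=
  [/\ A !=set0, open_set A & connected_set A].

Definition E_S (G : set 'M[R[i]]_2) (E : set cvec) (S : set (set cvec)) (delta : R)
  : set (cvec * cvec) :=
  [set p | [/\ E p.1, E p.2 &
     forall Y, refl_hyperplanes G Y -> ~ S Y ->
       delta <= setdist p.1 Y /\ delta <= setdist p.2 Y]].

Definition E_reg (G : set 'M[R[i]]_2) (E : set cvec) (delta : R) : set (cvec * cvec) :=
  [set p | [/\ E p.1, E p.2 &
     forall g, G g ->
       delta <= setdist p.1 (boundary E) + setdist p.2 (boundary E)
                + vdist (act g p.1) p.2]].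

End Defs.

(* Main.v *)
Require Import Defs.
From HB Require Import structures.
From mathcomp Require Import all_boot all_order all_algebra.
From mathcomp Require Import complex.
From mathcomp Require Import boolp classical_sets cardinality reals.
From mathcomp Require Import ring lra.
Import Order.TTheory GRing.Theory Num.Theory.
Local Open Scope ring_scope.
Local Open Scope classical_set_scope.
Local Open Scope complex_scope.

Section N.
Variable R : realType.
Definition nc (c : R[i]) : R := Num.sqrt (cabs2 c).
Lemma ncE c : nc c = ComplexField.Normc.normc c.
Proof. by case: c. Qed.
Lemma nc_ge0 c : 0 <= nc c. Proof. exact: sqrtr_ge0. Qed.
Lemma ncM a b : nc (a * b) = nc a * nc b.
Proof. by rewrite !ncE ComplexField.Normc.normcM. Qed.
Lemma ncD a b : nc (a + b) <= nc a + nc b.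
Proof. by rewrite !ncE le_normcD. Qed.
Lemma ncN a : nc (- a) = nc a.
Proof. by rewrite !ncE normcN. Qed.
Lemma nc2 c : nc c ^+ 2 = cabs2 c.
Proof. rewrite sqr_sqrtr // /cabs2; nra. Qed.
Lemma cabs2C (c : R[i]) : (cabs2 c)%:C = c * c^*%C.
Proof. by rewrite /cabs2 add_Re2_Im2 sqr_normc. Qed.
Lemma ncR (a : R) : nc a%:C = `|a|.
Proof. by rewrite /nc /cabs2 /= expr0n /= addr0 sqrtr_sqr. Qed.

Lemma le_sqrt_of (x y : R) : 0 <= y -> x ^+ 2 <= y -> x <= Num.sqrt y.
Proof.
move=> y0 h; have s0 := sqrtr_ge0 y; have s2 := sqr_sqrtr y0.
nra.
Qed.

Lemma cs2 (a0 a1 b0 b1 : R) :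
  a0 * b0 + a1 * b1 <= Num.sqrt (a0^+2 + a1^+2) * Num.sqrt (b0^+2 + b1^+2).
Proof.
have hA : 0 <= a0^+2 + a1^+2 by nra.
have hB : 0 <= b0^+2 + b1^+2 by nra.
rewrite -sqrtrM //; apply: le_sqrt_of; first nra.
have := sqr_ge0 (a0 * b1 - a1 * b0); nra.
Qed.

Lemma mink (a0 a1 b0 b1 : R) :
  Num.sqrt ((a0 + b0)^+2 + (a1 + b1)^+2) <=
  Num.sqrt (a0^+2 + a1^+2) + Num.sqrt (b0^+2 + b1^+2).
Proof.
have hA : 0 <= a0^+2 + a1^+2 by nra.
have hB : 0 <= b0^+2 + b1^+2 by nra.
have hL : 0 <= (a0 + b0)^+2 + (a1 + b1)^+2 by rewrite addr_ge0 ?sqr_ge0.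
have c := cs2 a0 a1 b0 b1.
have sA := sqr_sqrtr hA; have sB := sqr_sqrtr hB; have sL := sqr_sqrtr hL.
have gA := sqrtr_ge0 (a0^+2 + a1^+2); have gB := sqrtr_ge0 (b0^+2 + b1^+2).
have gL := sqrtr_ge0 ((a0 + b0)^+2 + (a1 + b1)^+2).
set A := Num.sqrt _ in c sA gA *; set B := Num.sqrt (b0^+2 + b1^+2) in c sB gB *.
set L := Num.sqrt _ in sL gL *.
have h : L ^+ 2 <= (A + B) ^+ 2 by rewrite sL; nra.
nra.
Qed.

Definition e0 : 'I_2 := ord0.
Definition e1 : 'I_2 := lift ord0 ord0.

Lemma vnormE (v : cvec R) :
  vnorm v = Num.sqrt (nc (v e0 0) ^+ 2 + nc (v e1 0) ^+ 2).
Proof. by rewrite /vnorm !big_ord_recl big_ord0 addr0 !nc2. Qed.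

Lemma vnorm_ge0 (v : cvec R) : 0 <= vnorm v.
Proof. exact: sqrtr_ge0. Qed.

Lemma vnormD (v w : cvec R) : vnorm (v + w) <= vnorm v + vnorm w.
Proof.
rewrite !vnormE !mxE.
apply: le_trans (mink _ _ _ _).
rewrite ler_sqrt; last by rewrite addr_ge0 // sqr_ge0.
have h0 := ncD (v e0 0) (w e0 0); have h1 := ncD (v e1 0) (w e1 0).
have := nc_ge0 (v e0 0 + w e0 0); have := nc_ge0 (v e1 0 + w e1 0).
have := nc_ge0 (v e0 0); have := nc_ge0 (w e0 0).
have := nc_ge0 (v e1 0); have := nc_ge0 (w e1 0).
nra.
Qed.

Lemma vnormZ (c : R[i]) (v : cvec R) : vnorm (c *: v) = nc c * vnorm v.
Proof.
rewrite !vnormE !mxE !ncM !exprMn -mulrDr sqrtrM ?sqr_ge0 // sqrtr_sqr.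
by rewrite ger0_norm // nc_ge0.
Qed.

Lemma vnormN (v : cvec R) : vnorm (- v) = vnorm v.
Proof.
rewrite -scaleN1r vnormZ.
suff -> : nc (-1) = 1 by rewrite mul1r.
by rewrite ncN /nc /cabs2 /= expr1n expr0n /= addr0 sqrtr1.
Qed.

Lemma vdistC (v w : cvec R) : vdist v w = vdist w v.
Proof. by rewrite /vdist -vnormN opprB. Qed.

Lemma vdist_tri (a b c : cvec R) : vdist a c <= vdist a b + vdist b c.
Proof.
rewrite /vdist; have -> : a - c = (a - b) + (b - c) by rewrite addrA subrK.
exact: vnormD.
Qed.

Lemma vdist_ge0 (a b : cvec R) : 0 <= vdist a b.
Proof. exact: vnorm_ge0. Qed.

Definition det2 (x y : cvec R) : R[i] := x e0 0 * y e1 0 - x e1 0 * y e0 0.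

Lemma det2_bound (x y : cvec R) : nc (det2 x y) <= vnorm x * vnorm y.
Proof.
rewrite /det2 !vnormE.
apply: le_trans (ncD _ _) _; rewrite ncN !ncM.
apply: le_trans (cs2 _ _ (nc (y e1 0)) (nc (y e0 0))) _.
by rewrite [X in _ * Num.sqrt X]addrC.
Qed.

Definition hq (v : cvec R) : R[i] := ((map_mx (@conjc R) v)^T *m v) 0 0.

Lemma hqE (v : cvec R) : hq v = (vnorm v ^+ 2)%:C.
Proof.
rewrite /hq vnormE sqr_sqrtr ?addr_ge0 ?sqr_ge0 // !nc2 rmorphD /= !cabs2C.
by rewrite mxE !big_ord_recl big_ord0 addr0 !mxE [_ * v e0 0]mulrC [_ * v e1 0]mulrC.
Qed.

Lemma unitary_iso (g : 'M[R[i]]_2) (v : cvec R) : unitary g ->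
  vnorm (g *m v) = vnorm v.
Proof.
move=> /mulmx1C Hg.
have : hq (g *m v) = hq v.
  rewrite /hq map_mxM trmx_mul -!mulmxA [X in _ *m X]mulmxA.
  by rewrite -/(adjoint g) Hg mul1mx.
rewrite !hqE => -[] /eqP; rewrite eqrXn2 ?vnorm_ge0 //.
by move/eqP.
Qed.

Lemma cvecP (v w : cvec R) : v e0 0 = w e0 0 -> v e1 0 = w e1 0 -> v = w.
Proof.
move=> h0 h1; apply/matrixP=> i j; rewrite [j]ord1.
case: i => -[|[|//]] Hi.
  by rewrite (_ : Ordinal Hi = e0) //; exact: val_inj.
by rewrite (_ : Ordinal Hi = e1) //; exact: val_inj.
Qed.

Definition lineof (u : cvec R) : set (cvec R) := [set c *: u | c in [set: R[i]]].

Lemma det2_ne0 (u1 u2 : cvec R) : u1 != 0 -> u2 != 0 ->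
  lineof u1 <> lineof u2 -> det2 u1 u2 != 0.
Proof.
move=> nz1 nz2 neq; apply/negP => /eqP D0; apply: neq.
suff [c [cnz ->]] : exists c, c != 0 /\ u2 = c *: u1.
  apply/seteqP; split => _ [d _ <-].
    exists (d / c) => //; by rewrite scalerA divfK.
  by exists (d * c) => //; rewrite scalerA.
have key : exists c, u2 = c *: u1.
  move: D0; rewrite /det2 => /eqP; rewrite subr_eq0 => /eqP D.
  have [a0z|a0nz] := eqVneq (u1 e0 0) 0.
    have a1nz : u1 e1 0 != 0.
      apply: contra nz1 => /eqP a1z; apply/eqP; apply: cvecP; by rewrite mxE.
    exists (u2 e1 0 / u1 e1 0); apply: cvecP; rewrite mxE.
      move: D; rewrite a0z mul0r => /esym/eqP; rewrite mulf_eq0 (negbTE a1nz) /=.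
      by move=> /eqP ->; rewrite mulr0.
    by rewrite divfK.
  exists (u2 e0 0 / u1 e0 0); apply: cvecP; rewrite mxE.
    by rewrite divfK.
  apply: (mulIf a0nz); rewrite mulrAC divfK // [u2 e0 0 * _]mulrC -D mulrC.
  done.
case: key => c Hc; exists c; split => //.
by apply: contra nz2 => /eqP c0; rewrite Hc c0 scale0r.
Qed.

Lemma nc_gt0 (c : R[i]) : c != 0 -> 0 < nc c.
Proof.
move=> cnz; rewrite lt_neqAle nc_ge0 andbT; apply/eqP => h.
by move/eqP: cnz; apply; apply: ComplexField.Normc.eq0_normc; rewrite -ncE h.
Qed.

Lemma line_bound (u1 u2 : cvec R) : u1 != 0 -> u2 != 0 ->
  lineof u1 <> lineof u2 -> exists K : R, 0 < K /\
  forall z y1 y2, lineof u1 y1 -> lineof u2 y2 ->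
    vnorm z <= K * (vdist z y1 + vdist z y2).
Proof.
move=> nz1 nz2 neq; have Dnz := @det2_ne0 u1 u2 nz1 nz2 neq.
set D := det2 u1 u2 in Dnz *.
have Dp := @nc_gt0 D Dnz.
set P := vnorm u1 * vnorm u2.
have P0 : 0 <= P by rewrite mulr_ge0 ?vnorm_ge0.
exists (P / nc D + 1); split.
  by rewrite ltr_wpDl // divr_ge0 // ltW.
move=> z _ _ [c1 _ <-] [c2 _ <-].
have eqz : D *: z = det2 (z - c2 *: u2) u2 *: u1 + det2 u1 (z - c1 *: u1) *: u2.
  apply: cvecP; rewrite /D /det2 !mxE; ring.
have h : nc D * vnorm z <= P * (vdist z (c1 *: u1) + vdist z (c2 *: u2)).
  rewrite -vnormZ eqz; apply: le_trans (vnormD _ _) _.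
  rewrite !vnormZ /vdist.
  have b1 := det2_bound (z - c2 *: u2) u2.
  have b2 := det2_bound u1 (z - c1 *: u1).
  have g1 := vnorm_ge0 u1; have g2 := vnorm_ge0 u2.
  have := vnorm_ge0 (z - c1 *: u1); have := vnorm_ge0 (z - c2 *: u2).
  rewrite /P; nra.
have s0 : 0 <= vdist z (c1 *: u1) + vdist z (c2 *: u2) by rewrite addr_ge0 ?vdist_ge0.
set s := vdist z _ + _ in s0 h *.
apply: (@le_trans _ _ (P / nc D * s)); last by rewrite mulrDl mul1r lerDl.
rewrite -(ler_pM2l Dp).
have -> : nc D * (P / nc D * s) = P * s.
  by field; rewrite gt_eqF.
done.
Qed.

Lemma unif_seq (T : eqType) (s : seq T) (P : T -> R -> Prop) :
  (forall x K K', P x K -> K <= K' -> P x K') ->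
  (forall x, x \in s -> exists K, 0 < K /\ P x K) ->
  exists K, 0 < K /\ forall x, x \in s -> P x K.
Proof.
move=> mono; elim: s => [|a s IH] H.
  by exists 1; split => // x.
have [K1 [K1p P1]] := H a (mem_head _ _).
have [K2 [K2p P2]] : exists K, 0 < K /\ forall x, x \in s -> P x K.
  by apply: IH => x xs; apply: H; rewrite in_cons xs orbT.
exists (K1 + K2); split; first by rewrite addr_gt0.
move=> x; rewrite in_cons => /orP[/eqP ->|xs].
  by apply: mono P1 _; rewrite lerDl ltW.
by apply: mono (P2 x xs) _; rewrite lerDr ltW.
Qed.

Lemma setdist_ge0 (v : cvec R) (A : set (cvec R)) : 0 <= setdist v A.
Proof.
rewrite /setdist; have [[y Ay]|nA] := pselect (A !=set0).
  apply: lb_le_inf; first by exists (vdist v y), y.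
  by move=> _ [w _ <-]; exact: vdist_ge0.
have -> : A = set0 by apply/seteqP; split => // x Ax; apply: nA; exists x.
by rewrite image_set0 inf0.
Qed.

Lemma setdist_lt (v : cvec R) (A : set (cvec R)) e : A !=set0 ->
  setdist v A < e -> exists y, A y /\ vdist v y < e.
Proof.
move=> [y Ay] /inf_lt []; first by exists (vdist v y), y.
by move=> _ [w Aw <-] h; exists w.
Qed.

Lemma setdist_lb (v : cvec R) (A : set (cvec R)) m : A !=set0 ->
  (forall y, A y -> m <= vdist v y) -> m <= setdist v A.
Proof.
move=> [y Ay] H; apply: lb_le_inf; first by exists (vdist v y), y.
by move=> _ [w Aw <-]; exact: H.
Qed.

Definition ev : cvec R := delta_mx e0 0.

Lemma vnorm_ev : vnorm ev = 1.
Proof.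
rewrite vnormE !mxE /=.
rewrite (_ : nc 1 = 1); last by rewrite /nc /cabs2 /= expr1n expr0n /= addr0 sqrtr1.
by rewrite (_ : nc 0 = 0) ?expr1n ?expr0n ?addr0 ?sqrtr1 // /nc /cabs2 /= expr0n /= addr0 sqrtr0.
Qed.

Lemma vdist_ray (a b : R) : vdist (a%:C *: ev) (b%:C *: ev) = `|a - b|.
Proof.
by rewrite /vdist -scalerBl -rmorphB vnormZ vnorm_ev mulr1 ncR.
Qed.


Lemma boundary_nonempty (E : set (cvec R)) :
  open_set E -> bounded_set E -> E 0 -> boundary E !=set0.
Proof.
move=> oE [M HM] E0.
pose A := [set t : R | 0 <= t /\ forall s, 0 <= s -> s <= t -> E (s%:C *: ev)].
have A0 : A 0.
  split => // s s0 s1; have -> : s = 0 by apply/eqP; rewrite eq_le s1 s0.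
  by rewrite scale0r.
have hA : has_sup A.
  split; first by exists 0.
  exists M => t [t0 Ht]; have := HM _ (Ht t t0 (lexx t)).
  by rewrite vnormZ vnorm_ev mulr1 ncR ger0_norm.
have ub := sup_upper_bound hA.
set ts := sup A in ub *.
have ts0 : 0 <= ts by exact: ub.
have F : forall s, 0 <= s -> s < ts -> E (s%:C *: ev).
  move=> s s0 sts; have e0 : 0 < ts - s by rewrite subr_gt0.
  have [t [t0 Ht] lt] := sup_adherent e0 hA.
  by apply: Ht => //; apply: ltW; move: lt; rewrite opprB addrC subrK.
exists (ts%:C *: ev); split.
  move=> e e0; have [t [t0 Ht] lt] := sup_adherent e0 hA.
  exists (t%:C *: ev); split; first by apply: Ht.
  have tts : t <= ts by exact: ub.
  rewrite vdist_ray ger0_norm ?subr_ge0 //.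
  by rewrite ltrBlDr addrC -ltrBlDr.
move=> [rho [rho0 Hrho]].
have : A (ts + rho / 2).
  split; first by rewrite addr_ge0 // divr_ge0 // ltW.
  move=> s s0 sle; have [slt|tsle] := ltP s ts; first exact: F.
  apply: Hrho; rewrite vdist_ray distrC ger0_norm ?subr_ge0 //.
  apply: le_lt_trans (_ : rho / 2 < rho); first by rewrite lerBlDl.
  lra.
move/ub; rewrite gerDl leNgt => /negP; apply.
by rewrite divr_gt0.
Qed.

Lemma boundary_far (E : set (cvec R)) (r : R) :
  open_set E -> (forall w, vdist 0 w < r -> E w) ->
  forall b, boundary E b -> r <= vnorm b.
Proof.
move=> oE Hr b [_ nint]; rewrite leNgt; apply/negP => lt.
apply: nint; apply: oE; apply: Hr.
by rewrite /vdist sub0r vnormN.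
Qed.

Lemma setdist_boundary (E : set (cvec R)) (r : R) :
  open_set E -> bounded_set E -> E 0 -> (forall w, vdist 0 w < r -> E w) ->
  forall v, r - vnorm v <= setdist v (boundary E).
Proof.
move=> oE bE E0 Hr v; apply: setdist_lb; first exact: (@boundary_nonempty E).
move=> b Bb; have := @boundary_far E r oE Hr b Bb.
have := vdist_tri 0 v b; rewrite /vdist sub0r !vnormN.
move=> h1 h2; rewrite sub0r vnormN in h1; lra.
Qed.


Definition Qb (Y1 Y2 : set (cvec R)) (K : R) : Prop :=
  forall z y1 y2, Y1 y1 -> Y2 y2 -> vnorm z <= K * (vdist z y1 + vdist z y2).

Lemma Qb_mono Y1 Y2 K K' : Qb Y1 Y2 K -> K <= K' -> Qb Y1 Y2 K'.
Proof.
move=> H KK z y1 y2 h1 h2; apply: le_trans (H z y1 y2 h1 h2) _.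
by rewrite ler_wpM2r // addr_ge0 ?vdist_ge0.
Qed.

Definition Qg (g1 g2 : 'M[R[i]]_2) (K : R) : Prop :=
  reflection g1 -> reflection g2 -> Defs.fixset g1 <> Defs.fixset g2 ->
  Qb (Defs.fixset g1) (Defs.fixset g2) K.

Lemma Qg_ex g1 g2 : exists K, 0 < K /\ Qg g1 g2 K.
Proof.
have [[r1 [r2 ne]]|nH] := pselect (reflection g1 /\ reflection g2 /\ Defs.fixset g1 <> Defs.fixset g2);
  last first.
  by exists 1; split => // h1 h2 h3; exfalso; apply: nH.
case: r1 => _ _ [u1 [nz1 e1']]; case: r2 => _ _ [u2 [nz2 e2']].
rewrite e1' e2' in ne.
have [K [Kp HK]] := @line_bound u1 u2 nz1 nz2 ne.
exists K; split => // _ _ _; rewrite e1' e2'; exact: HK.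
Qed.

Lemma hyp_const (G : set 'M[R[i]]_2) : finite_set G ->
  exists K, 0 < K /\ forall Y1 Y2, refl_hyperplanes G Y1 -> refl_hyperplanes G Y2 ->
    Y1 <> Y2 -> Qb Y1 Y2 K.
Proof.
move=> /finite_seqP [s Gs].
have [K [Kp HK]] : exists K, 0 < K /\ forall g1, g1 \in s -> forall g2, g2 \in s -> Qg g1 g2 K.
  apply: unif_seq.
    move=> g1 K K' H KK g2 g2s h1 h2 h3; apply: Qb_mono KK; exact: H.
  move=> g1 _; apply: unif_seq => //.
    move=> g2 K K' H KK h1 h2 h3; apply: Qb_mono KK; exact: H.
  move=> g2 _; exact: Qg_ex.
exists K; split => // _ _ [g1 [G1 r1 ->]] [g2 [G2 r2 ->]] ne.
have g1s : g1 \in s by move: G1; rewrite Gs.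
have g2s : g2 \in s by move: G2; rewrite Gs.
exact: HK.
Qed.


Lemma rh_nonempty (G : set 'M[R[i]]_2) Y : refl_hyperplanes G Y -> Y !=set0.
Proof.
move=> [g [_ [_ _ [u [_ eu]]] ->]]; rewrite eu; exists 0, 0 => //.
by rewrite scale0r.
Qed.

Lemma not_ES (G : set 'M[R[i]]_2) (E : set (cvec R)) S (d : R) z w :
  E z -> E w -> ~ E_S G E S d (z, w) ->
  exists Y, [/\ refl_hyperplanes G Y, ~ S Y &
    exists y, Y y /\ (vdist z y < d \/ vdist w y < d)].
Proof.
move=> Ez Ew nES; apply: contrapT => nEx; apply: nES; split => // Y RY nSY /=.
have Yne := @rh_nonempty G Y RY.
split; rewrite leNgt; apply/negP => lt; apply: nEx; exists Y; split => //.
  by have [y [Yy h]] := @setdist_lt z Y d Yne lt; exists y; split => //; left.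
by have [y [Yy h]] := @setdist_lt w Y d Yne lt; exists y; split => //; right.
Qed.

Lemma act_dist (g : 'M[R[i]]_2) (z y : cvec R) : unitary g ->
  vdist (act g z) (act g y) = vdist z y.
Proof. by move=> ug; rewrite /vdist /act -mulmxBr unitary_iso. Qed.

Lemma act_norm (g : 'M[R[i]]_2) (z : cvec R) : unitary g ->
  vnorm (act g z) = vnorm z.
Proof. by move=> ug; rewrite /act unitary_iso. Qed.

End N.
Arguments hyp_const {R G}.
Arguments setdist_boundary {R E r}.
Arguments setdist_ge0 {R}.
Arguments not_ES {R G E S d z w}.
Arguments vdist_ge0 {R}.
Arguments act_dist {R g z y}.
Arguments act_norm {R g z}.
Arguments vdist_tri {R}.

Theorem lemma6p1 (R : realType) (G : set 'M[R[i]]_2)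
  (S1 S2 : set (set (cvec R))) (E : set (cvec R)) :
  finite_unitary_reflection_group G ->
  S1 `|` S2 = refl_hyperplanes G ->
  S1 `&` S2 = set0 ->
  G_invariant_family G S1 ->
  G_invariant_family G S2 ->
  domain E -> bounded_set E -> G_invariant_set G E -> E 0 ->
  exists delta : R, 0 < delta /\
    [set p | E p.1 /\ E p.2] =
      E_S G E S1 delta `|` E_S G E S2 delta `|` E_reg G E delta.
Proof.
move=> [[fin Gun _ _ _] _] S12 S1S2 inv1 inv2 [_ oE _] bE _ E0.
have [r [r0 Hr]] := oE 0 E0.
have [K [Kp HK]] := hyp_const fin.
pose dl := r / (1 + 3 * K).
have p3 : 0 < 1 + 3 * K by lra.
have dp : 0 < dl by rewrite divr_gt0.
have rd : r - 3 * K * dl = dl.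
  by rewrite /dl; field; rewrite gt_eqF.
have key : forall v, vnorm v <= 3 * K * dl -> dl <= setdist v (boundary E).
  move=> v hv; apply: le_trans (setdist_boundary oE bE E0 Hr v); by rewrite -{1}rd lerD2l lerN2.
have RH1 : forall Y, S1 Y -> refl_hyperplanes G Y by move=> Y h; rewrite -S12; left.
have RH2 : forall Y, S2 Y -> refl_hyperplanes G Y by move=> Y h; rewrite -S12; right.
have ne12 : forall Y1 Y2, S1 Y1 -> S2 Y2 -> Y1 <> Y2.
  move=> Y1 Y2 h1 h2 e; have : (S1 `&` S2) Y1 by split => //; rewrite e.
  by rewrite S1S2.
exists dl; split => //; apply/seteqP; split; last first.
  by move=> p [[[h1 h2 _]|[h1 h2 _]]|[h1 h2 _]].
move=> [z w] /= [Ez Ew].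
have [h|n1] := pselect (E_S G E S1 dl (z, w)); first by left; left.
have [h|n2] := pselect (E_S G E S2 dl (z, w)); first by left; right.
right; split => // g Gg /=.
have ug := Gun g Gg.
have sz := setdist_ge0 z (boundary E); have sw := setdist_ge0 w (boundary E).
have [le|lt] := leP dl (vdist (act g z) w); first lra.
have [Y2 [RY2 nS1 [y2 [Yy2 h2]]]] := not_ES Ez Ew n1.
have [Y1 [RY1 nS2 [y1 [Yy1 h1]]]] := not_ES Ez Ew n2.
have SY2 : S2 Y2 by move: RY2; rewrite -S12 => -[].
have SY1 : S1 Y1 by move: RY1; rewrite -S12 => -[].
suff [hz|hw] : vnorm z <= 3 * K * dl \/ vnorm w <= 3 * K * dl.
- have := key _ hz; have := vdist_ge0 (act g z) w; lra.
- have := key _ hw; have := vdist_ge0 (act g z) w; lra.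
have := vdist_ge0 z y1; have := vdist_ge0 z y2.
have := vdist_ge0 w y1; have := vdist_ge0 w y2.
case: h1 => h1; case: h2 => h2 => g1 g2 g3 g4.
- left; have := HK _ _ RY1 RY2 (ne12 _ _ SY1 SY2) z y1 y2 Yy1 Yy2; nra.
- left; have SgY1 := inv1 _ _ Gg SY1.
  have gy1 : act_set g Y1 (act g y1) by exists y1.
  have := HK _ _ (RH1 _ SgY1) RY2 (ne12 _ _ SgY1 SY2) (act g z) _ _ gy1 Yy2.
  rewrite act_dist // act_norm // => hb.
  have := vdist_tri (act g z) w y2; nra.
- left; have SgY2 := inv2 _ _ Gg SY2.
  have gy2 : act_set g Y2 (act g y2) by exists y2.
  have := HK _ _ RY1 (RH2 _ SgY2) (ne12 _ _ SY1 SgY2) (act g z) _ _ Yy1 gy2.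
  rewrite act_dist // act_norm // => hb.
  have := vdist_tri (act g z) w y1; nra.
- right; have := HK _ _ RY1 RY2 (ne12 _ _ SY1 SY2) w y1 y2 Yy1 Yy2; nra.
Qed.
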